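(* Fix $n\in\mathbb N$. The measures $\{\mathbf P^n_x\}_{x\in\mathbb Z_{\ge0}}$ can be coupled on a common probability space, with coordinate processes $(S^x_k)_{k=0}^n$ of law $\mathbf P^n_x$, in such a way that almost surely $|S^{x+1}_k-S^x_k|=1$ for all $x\ge0$ and all $0\le k\le n$. In particular, for all $x,y\ge0$, $\sup_{k\le n}|S^x_k-S^y_k|\le|x-y|$ almost surely.
   Context: $\mathbf P^n_x$ is the uniform probability measure on the finite set of paths $(s_0,\dots,s_n)\in\mathbb Z_{\ge0}^{n+1}$ with $s_0=x$ and $|s_{i+1}-s_i|=1$ for all $i$ (simple symmetric random walk conditioned to stay non-negative up to time $n$). *)

(* Defs.v *)
From HB Require Import structures.
From mathcomp Require Import all_boot all_order all_algebra.
Set Implicit Arguments. Unset Strict Implicit. Unset Printing Implicit Defensive.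
Import Order.TTheory GRing.Theory Num.Theory.

(* walks n x : the list of all paths (s_0,...,s_n) in Z_{>=0}^{n+1} with
   s_0 = x and |s_{i+1} - s_i| = 1, each path given as a seq nat of size n+1. *)
Fixpoint walks (n x : nat) : seq (seq nat) :=
  match n with
  | 0 => [:: [:: x]]
  | m.+1 => [seq x :: w | w <- walks m x.+1] ++
            (if x is x'.+1 then [seq x :: w | w <- walks m x'] else [::])
  end.

Definition is_walk (n x : nat) (s : seq nat) : bool :=
  [&& size s == n.+1, head 0 s == x &
      all (fun i => `|nth 0 s i.+1 - nth 0 s i|%N == 1) (iota 0 n)].

Definition walk_law (R : realFieldType) (n x : nat) (s : seq nat) : R :=
  (if s \in walks n x then ((size (walks n x))%:R)^-1 else 0)%R.

(* Main.v *)
Require Import Defs.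
From HB Require Import structures.
From mathcomp Require Import all_boot all_order all_algebra.
From mathcomp Require Import zify ring lra.
Import Order.TTheory GRing.Theory Num.Theory.

Fixpoint hh (m x : nat) : nat :=
  match m with 0 => 1 | m'.+1 => hh m' x.+1 + (if x is x'.+1 then hh m' x' else 0) end.

Lemma size_walks m x : size (walks m x) = hh m x.
Proof.
elim: m x => [|m IH] x //=; rewrite size_cat size_map IH; case: x => //= x.
by rewrite size_map IH.
Qed.

Lemma hh_gt0 m x : 0 < hh m x.
Proof. elim: m x => [|m IH] x //=; by rewrite addn_gt0 IH. Qed.

Lemma hh_le m x : hh m x <= 2 ^ m.
Proof.
elim: m x => [|m IH] x //=; rewrite expnS mul2n -addnn; apply: leq_add => //.
by case: x.
Qed.

Definition G m z := if z is z'.+1 then hh m z' else 0.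

Lemma G_step m z : G m.+1 z.+1 = G m z.+2 + G m z.
Proof. by case: z. Qed.

Lemma G_conc m : forall z, G m z + G m z.+2 <= 2 * G m z.+1 /\ G m z <= G m z.+1.
Proof.
elim: m => [|m IH] z; first by case: z => [|[|z]].
case: z => [|z].
  rewrite !G_step; have ->: G m.+1 0 = 0 by []; have ->: G m 0 = 0 by [].
  have [H1 H2] := IH 1; split; lia.
rewrite !G_step; have [H1 H2] := IH z; have [H3 H4] := IH z.+2.
have [H5 H6] := IH z.+1. split; lia.
Qed.

Lemma aux_ineq a b c d : a + c <= 2 * b -> a <= b -> b + d <= 2 * c -> b <= c ->
  c <= d -> d * (c + a) <= c * (d + b).
Proof.
move=> H1 H2 H3 H4 H5.
have [p Hp] : exists p, b = a + p by exists (b - a); lia.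
have [q Hq] : exists q, c = a + p + q by exists (c - a - p); lia.
have [r Hr] : exists r, d = a + p + q + r by exists (d - a - p - q); lia.
subst b c d.
have Hqp : q <= p by lia. have Hrq : r <= q by lia.
nia.
Qed.

Lemma key n x : hh n x.+2 * hh n.+1 x <= hh n x.+1 * hh n.+1 x.+1.
Proof.
have E1 : hh n.+1 x = G n x.+2 + G n x by rewrite -G_step.
have E2 : hh n.+1 x.+1 = G n x.+3 + G n x.+1 by rewrite -G_step.
rewrite E1 E2 -/(G n x.+3) -/(G n x.+2).
have [H1 H2] := G_conc n x; have [H3 H4] := G_conc n x.+1.
have [H5 H6] := G_conc n x.+2.
exact: aux_ineq.
Qed.

Lemma mem_cons_map (x y : nat) (L : seq (seq nat)) s :
  (y :: s \in [seq x :: w | w <- L]) = (y == x) && (s \in L).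
Proof.
apply/mapP/andP => [[w Hw [-> ->]]|[/eqP -> Hs]]; first by rewrite eqxx.
by exists s.
Qed.

Lemma nil_notin m x : ([::] \in walks m x) = false.
Proof.
case: m => [|m] //=; rewrite mem_cat; apply/negbTE; rewrite negb_or.
apply/andP; split; first by apply/mapP => -[].
by case: x => //= x; apply/mapP => -[].
Qed.

Lemma mem_walksS n x y s : (y :: s \in walks n.+1 x) =
  (y == x) && ((s \in walks n x.+1) || ((0 < x)%N && (s \in walks n x.-1))).
Proof.
rewrite /= mem_cat mem_cons_map; case: x => [|x] /=.
  by rewrite in_nil !orbF.
by rewrite mem_cons_map andb_orr.
Qed.

Lemma walks_head m y s : s \in walks m y -> exists t, s = y :: t.
Proof.
case: s => [|z t]; first by rewrite nil_notin.
case: m => [|m]; first by rewrite inE => /eqP [-> ->]; exists [::].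
by rewrite mem_walksS => /andP [/eqP -> _]; exists t.
Qed.

Arguments walks_head {m y s}.
Section Thr.
Variable n : nat.
Definition MM := (2 ^ n.+1)`!.
Definition TT x := MM %/ hh n.+1 x * hh n x.+1.

Lemma MM_gt0 : (0 < MM)%N. Proof. exact: fact_gt0. Qed.
Lemma dvd_MM x : hh n.+1 x %| MM.
Proof. by apply: dvdn_fact; rewrite hh_gt0 hh_le. Qed.

Lemma TT_eq x : TT x * hh n.+1 x = MM * hh n x.+1.
Proof. by rewrite /TT mulnAC divnK ?dvd_MM. Qed.

Lemma TT0 : TT 0 = MM.
Proof. by rewrite /TT /= addn0 divnK // -(addn0 (hh n 1)) -[X in _ %| X]/(MM); apply: (dvd_MM 0). Qed.

Lemma hh_le_S x : (hh n x.+1 <= hh n.+1 x)%N.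
Proof. by rewrite /= leq_addr. Qed.

Lemma TT_le x : (TT x <= MM)%N.
Proof.
have := TT_eq x; have := hh_le_S x; have := hh_gt0 n.+1 x.
move=> h0 h1 h2; rewrite -(leq_pmul2r h0) h2 leq_mul2l h1 orbT //.
Qed.

Lemma TT_mono x : (TT x.+1 <= TT x)%N.
Proof.
have P : (0 < hh n.+1 x * hh n.+1 x.+1)%N by rewrite muln_gt0 !hh_gt0.
rewrite -(leq_pmul2r P).
have -> : TT x.+1 * (hh n.+1 x * hh n.+1 x.+1) = MM * (hh n x.+2 * hh n.+1 x)
  by rewrite [hh n.+1 x * _]mulnC mulnA TT_eq mulnA.
have -> : TT x * (hh n.+1 x * hh n.+1 x.+1) = MM * (hh n x.+1 * hh n.+1 x.+1)
  by rewrite mulnA TT_eq mulnA.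
rewrite leq_mul2l; apply/orP; right.
exact: key.
Qed.

Lemma TT_B x : (MM - TT x.+1) * hh n.+1 x.+1 = MM * hh n x.
Proof.
rewrite mulnBl TT_eq /= -mulnBr; congr (_ * _); lia.
Qed.
End Thr.

Local Open Scope ring_scope.

Lemma sum_split (V : nmodType) (M T : nat) (A B : V) : (T <= M)%N ->
  \sum_(u < M) (if (u < T)%N then A else B) = A *+ T + B *+ (M - T).
Proof.
move=> HT; rewrite -(big_mkord xpredT (fun u => if (u < T)%N then A else B)).
rewrite (big_cat_nat (leq0n T) HT) /=.
rewrite (eq_big_nat _ _ (F2 := fun=> A)); last by move=> i /andP [_ ->].
rewrite (eq_big_nat _ _ (F2 := fun=> B) (m := T)); last first.
  by move=> i /andP [h _]; rewrite ltnNge h.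
by rewrite !sumr_const_nat subn0.
Qed.

Definition Inv (R : realFieldType) (n : nat) :=
  exists (Om : finType) (p : Om -> R) (S : Om -> nat -> seq nat),
  [/\ forall w, 0 <= p w, \sum_(w : Om) p w = 1,
      forall x s, \sum_(w : Om | S w x == s) p w = walk_law R n x s &
      forall w x k, (k <= n)%N ->
        `|nth 0%N (S w x.+1) k - nth 0%N (S w x) k|%N = 1%N].

Lemma Inv0 R : Inv R 0.
Proof.
exists 'I_1, (fun => 1), (fun _ x => [:: x]); split.
- by move=> w; rewrite ler01.
- by rewrite big_ord1.
- move=> x s; rewrite big_mkcond big_ord1 /walk_law /= inE eq_sym.
  by case: (_ == _); rewrite ?invr1.
- by move=> w x k; rewrite leqn0 => /eqP -> /=; rewrite distSn.
Qed.

Lemma natr_neq0 (R : realFieldType) (m : nat) : (0 < m)%N -> (m%:R : R) != 0.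
Proof. by move=> h; rewrite pnatr_eq0 -lt0n. Qed.

Lemma InvS R n : Inv R n -> Inv R n.+1.
Proof.
move=> [Om [p [S [Hp Hs Hm Hc]]]].
pose M := MM n.
pose v (b : nat) x := if (b < TT n x)%N then x.+1 else x.-1.
exists (Om * 'I_M)%type, (fun w : Om * 'I_M => p w.1 / M%:R),
  (fun (w : Om * 'I_M) x => x :: S w.1 (v w.2 x)).
have M0 : (M%:R : R) != 0 by apply: natr_neq0; apply: MM_gt0.
have E : forall F : Om * 'I_M -> R, \sum_w F w = \sum_a \sum_(b : 'I_M) F (a, b).
  by move=> F; rewrite pair_big; apply: eq_bigr => -[].
split.
- by move=> w; rewrite divr_ge0 ?ler0n.
- rewrite E -[RHS]Hs; apply: eq_bigr => a _ /=.
  by rewrite big_const_ord iter_addr addr0 -[_ *+ M]mulr_natr divfK.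
- move=> x s; rewrite big_mkcond E exchange_big /=.
  case: s => [|y s'].
    rewrite /walk_law nil_notin big1 // => b _; rewrite big1 // => a _.
  case: (eqVneq y x) => [->|nxy]; last first.
    rewrite /walk_law mem_walksS (negbTE nxy) /= big1 // => b _.
    by rewrite big1 // => a _; rewrite eqseq_cons eq_sym (negbTE nxy).
  have Hin : forall b : 'I_M,
    \sum_a (if x :: S a (v b x) == x :: s' then p a / M%:R else 0) =
    walk_law R n (v b x) s' / M%:R.
    move=> b; rewrite -Hm mulr_suml [RHS]big_mkcond; apply: eq_bigr => a _.
    by rewrite eqseq_cons eqxx.
  rewrite (eq_bigr (fun b : 'I_M => walk_law R n (v b x) s' / M%:R)); last first.
    by move=> b _; exact: Hin.
  have Hif : forall b : 'I_M, walk_law R n (v b x) s' / M%:R =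
    if (b < TT n x)%N then walk_law R n x.+1 s' / M%:R
    else walk_law R n x.-1 s' / M%:R by move=> b; rewrite /v; case: ifP.
  rewrite (eq_bigr _ (fun (b : 'I_M) _ => Hif b)) sum_split ?TT_le //.
  rewrite /walk_law mem_walksS eqxx andTb !size_walks.
  case: x Hif Hin => [|x] _ _.
    rewrite TT0 subnn mulr0n addr0 /= orbF addn0.
    by case: (s' \in walks n 1); rewrite -[_ *+ MM n]mulr_natr ?mul0r // divfK.
  have Hd : ((hh n.+1 x.+1)%:R : R) != 0 by apply: natr_neq0; apply: hh_gt0.
  have He1 : ((hh n x.+2)%:R : R) != 0 by apply: natr_neq0; apply: hh_gt0.
  have He0 : ((hh n x)%:R : R) != 0 by apply: natr_neq0; apply: hh_gt0.
  have HT : ((TT n x.+1)%:R : R) = M%:R * (hh n x.+2)%:R / (hh n.+1 x.+1)%:R.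
    by have := TT_eq n x.+1 => /(congr1 (fun m => m%:R : R));
      rewrite !natrM => <-; rewrite mulfK.
  have HB : (((M - TT n x.+1)%N)%:R : R) = M%:R * (hh n x)%:R / (hh n.+1 x.+1)%:R.
    by have := TT_B n x => /(congr1 (fun m => m%:R : R));
      rewrite !natrM => <-; rewrite mulfK.
  rewrite -[_ *+ TT n x.+1]mulr_natr -[_ *+ (MM n - _)]mulr_natr HT HB.
  set d := hh n.+1 x.+1 in HT HB Hd *.
  case h1: (s' \in walks n x.+2); case h0: (s' \in walks n x) => /=.
  + exfalso; have [t1 e1] := walks_head h1; have [t0 e0] := walks_head h0.
    by move: e1; rewrite e0 => -[] /eqP; rewrite -addn2 -{1}[x]addn0 eqn_add2l.
  + by field; rewrite Hd M0 He1.
  + by field; rewrite Hd M0 He0.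
  + by rewrite !mul0r addr0.
- move=> [a b] x k; case: k => [|k] /=; first by rewrite distSn.
  rewrite ltnS => hk; rewrite /v.
  have hb : (b < M)%N := ltn_ord b.
  have hm := TT_mono n x.
  case: (ltnP b (TT n x.+1)) => h1; case: (ltnP b (TT n x)) => h0.
  + exact: Hc.
  + exfalso; lia.
  + by rewrite distnC Hc.
  + case: x h0 h1 hm => [|x] h0 _ _; first by move: h0; rewrite TT0 leqNgt hb.
    exact: Hc.
Qed.

Lemma InvN R n : Inv R n.
Proof. elim: n => [|n IH]; [exact: Inv0 | exact: InvS]. Qed.

Lemma dist_bound (Om : finType) (S : Om -> nat -> seq nat) n
  (H : forall w x k, (k <= n)%N ->
        `|nth 0%N (S w x.+1) k - nth 0%N (S w x) k|%N = 1%N) w x y k :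
  (k <= n)%N -> (`|nth 0%N (S w x) k - nth 0%N (S w y) k|%N <= `|x - y|%N)%N.
Proof.
move=> hk.
have D : forall x d, (`|nth 0%N (S w x) k - nth 0%N (S w (x + d)) k|%N <= d)%N.
  move=> x0; elim=> [|d IH]; first by rewrite addn0 distnn.
  apply: leq_trans (leqD_dist _ (nth 0%N (S w (x0 + d)) k)%:Z _) _.
  by rewrite [X in (_ + X <= _)%N]distnC addnS H // addn1 ltnS.
case: (leqP x y) => hxy.
  by rewrite (distnEr hxy) -{1}(subnKC hxy) D.
rewrite distnC (distnEl (ltnW hxy)) -{1}(subnKC (ltnW hxy)).
exact: D.
Qed.

Theorem propositionA5 (R : realFieldType) (n : nat) :
  exists (Omega : finType) (p : Omega -> R) (S : Omega -> nat -> seq nat),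
    [/\ (forall w, 0 <= p w),
        \sum_(w : Omega) p w = 1,
        (forall (x : nat) (s : seq nat),
            \sum_(w : Omega | S w x == s) p w = walk_law R n x s),
        (forall w, 0 < p w -> forall (x k : nat), (k <= n)%N ->
            `|nth 0%N (S w x.+1) k - nth 0%N (S w x) k|%N = 1%N) &
        (forall w, 0 < p w -> forall (x y k : nat), (k <= n)%N ->
            (`|nth 0%N (S w x) k - nth 0%N (S w y) k|%N <= `|x - y|%N)%N)].
Proof.
have [Om [p [S [H1 H2 H3 H4]]]] := InvN R n.
exists Om, p, S; split => // w _; [exact: H4 | move=> x y k; exact: dist_bound].
Qed.
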